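(* Let $G=(V,E)$ be a transitive and finite directed graph which is not a cycle. Let $e_0\in E$ be such that $r(e_0)$ has in-degree $1$. Then: (i) $e_0$ is not a loop; (ii) the edge contraction $G/e_0$ has one fewer vertex of in-degree $1$ than $G$ has; (iii) $G/e_0$ is a finite transitive directed graph which is not a cycle.
   Context: A directed graph $G=(V,E,r,s)$; the in-degree of $v$ is $|r^{-1}(v)|$; a loop is an edge $e$ with $r(e)=s(e)$. $G$ is transitive if there is a path between any two vertices. ''$G$ is a cycle'' means $G$ is the $n$-cycle graph for some $n\ge1$ (vertices $v_1,\dots,v_n$, exactly one edge from $v_i$ to $v_{i+1}$, indices mod $n$). The edge contraction $G/e$ is obtained by removing the edge $e$ and identifying $s(e)$ and $r(e)$; when $r(e)\ne s(e)$ this is done by removing the vertex $r(e)$ and changing every edge with source (resp. range) $r(e)$ to have source (resp. range) $s(e)$. *)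

(* Defs.v *)
From mathcomp Require Import all_boot.
Set Implicit Arguments. Unset Strict Implicit. Unset Printing Implicit Defensive.

Record graph : Type := Graph {
  vert : finType;
  edge : finType;
  rg : edge -> vert;
  sc : edge -> vert }.

Section Graphs.
Variable G : graph.

Definition indeg (v : vert G) : nat := #|[pred e : edge G | rg e == v]|.

Definition n_indeg1 : nat := #|[pred v : vert G | indeg v == 1]|.

Definition is_loop (e : edge G) : Prop := rg e = sc e.

Definition adj : rel (vert G) := fun v w => [exists e : edge G, (sc e == v) && (rg e == w)].

Definition transitive_graph : Prop := forall v w : vert G, connect adj v w.

(* G is (isomorphic to) the n-cycle graph for some n >= 1:
   vertices v_0..v_{n-1} enumerating V bijectively, exactly one edge from v_i to
   v_{i+1 mod n}, and no other edges. *)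
Definition is_cycle : Prop :=
  exists n : nat, exists f : 'I_n -> vert G,
    0 < n /\ bijective f /\
    forall i j : 'I_n,
      #|[pred e : edge G | (sc e == f i) && (rg e == f j)]| = (j == ordS i : nat).

(* Edge contraction G/e. Vertices kept: all v <> r(e) (all vertices when e is
   a loop); edges kept: all f <> e; endpoints equal to r(e) are redirected to s(e). *)
Definition keepV (e : edge G) (v : vert G) : bool := (v != rg e) || (rg e == sc e).

Lemma keepV_redirect (e : edge G) (v : vert G) :
  keepV e (if v == rg e then sc e else v).
Proof.
rewrite /keepV; case: (eqVneq v (rg e)) => [_|->] //=.
by rewrite [rg e == _]eq_sym orNb.
Qed.

Definition cvert (e : edge G) : finType := {v : vert G | keepV e v}.
Definition cedge (e : edge G) : finType := {f : edge G | f != e}.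

Definition redirect (e : edge G) (v : vert G) : cvert e :=
  exist _ (if v == rg e then sc e else v) (keepV_redirect e v).

End Graphs.

Definition contract (G : graph) (e : edge G) : graph :=
  @Graph (cvert e) (cedge e)
    (fun f => redirect e (rg (val f)))
    (fun f => redirect e (sc (val f))).

(* Main.v *)
Require Import Defs.
From mathcomp Require Import all_boot zify.
Set Implicit Arguments. Unset Strict Implicit. Unset Printing Implicit Defensive.

Lemma card_sig_pred (T : finType) (Q P : pred T) :
  #|[pred x : {x | Q x} | P (val x)]| = #|[pred x | Q x && P x]|.
Proof.
rewrite -(card_image val_inj); apply: eq_card => y; rewrite !inE.
apply/imageP/andP => [[x Px ->]|[Qy Py]]; first by split=> //; exact: valP.
by exists (exist _ y Qy).
Qed.

Definition cnt (H : graph) (x y : vert H) :=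
  #|[pred e : edge H | (sc e == x) && (rg e == y)]|.

Section S.
Variable G : graph.
Variable e0 : edge G.
Hypothesis Htr : transitive_graph G.
Hypothesis Hin : indeg (rg e0) = 1.

Lemma rg_v (f : edge G) : rg f = rg e0 -> f = e0.
Proof.
move=> H; have : #|[pred e : edge G | rg e == rg e0]| <= 1 by rewrite -/(indeg _) Hin.
move/card_le1P => /(_ e0); rewrite inE eqxx => /(_ isT f).
by rewrite !inE H eqxx => /esym/eqP.
Qed.

Lemma not_loop : ~ is_cycle G -> ~ is_loop e0.
Proof.
move=> Hnc Hl; apply: Hnc.
have allv : forall w, w = rg e0.
  move=> w; case: (eqVneq w (rg e0)) => // Hne.
  move: (Htr w (rg e0)) => /connectP [p].
  elim: p w Hne => [|x p IH] w Hne /=; first by move=> _ E; rewrite E eqxx in Hne.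
  case/andP => /existsP [f /andP [/eqP Hs /eqP Hr]] Hp Hl'.
  case: (eqVneq x (rg e0)) => [Ex|Nx].
    by move: Hr; rewrite Ex => /rg_v Ef; rewrite -Hs Ef -Hl.
  by have := IH x Nx Hp Hl'; move=> E; rewrite E eqxx in Nx.
exists 1, (fun _ => rg e0); split=> //; split.
  exists (fun _ => ord0) => [i|w]; first by rewrite (ord1 i).
  by rewrite (allv w).
move=> i j; rewrite (ord1 i) (ord1 j) /=.
rewrite (@eq_card _ _ (pred1 e0)) ?card1 // => f; rewrite !inE.
by rewrite (allv (sc f)) (allv (rg f)) eqxx; apply/esym/eqP/rg_v/allv.
Qed.
End S.

Section T.
Variable G : graph.
Variable e0 : edge G.
Hypothesis Htr : transitive_graph G.
Hypothesis Hin : indeg (rg e0) = 1.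
Hypothesis Hnl : rg e0 != sc e0.

Lemma keepE (w : vert G) : keepV e0 w = (w != rg e0).
Proof. by rewrite /keepV (negbTE Hnl) orbF. Qed.

Lemma valN (x : cvert e0) : val x != rg e0.
Proof. by rewrite -keepE; exact: valP. Qed.

Lemma redirect_val (x : cvert e0) : redirect e0 (val x) = x.
Proof. by apply: val_inj; rewrite /= (negbTE (valN x)). Qed.

Lemma val_redirect w : val (redirect e0 w) = if w == rg e0 then sc e0 else w.
Proof. by []. Qed.

Lemma card_cedge (P : pred (edge G)) :
  #|[pred f : cedge e0 | P (val f)]| = #|[pred f | (f != e0) && P f]|.
Proof. exact: (@card_sig_pred _ (fun f => f != e0) P). Qed.

Lemma card_cvert (P : pred (vert G)) :
  #|[pred f : cvert e0 | P (val f)]| = #|[pred f | keepV e0 f && P f]|.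
Proof. exact: (@card_sig_pred _ (keepV e0) P). Qed.

Lemma rgN (f : edge G) : f != e0 -> rg f != rg e0.
Proof. by apply: contra => /eqP /(rg_v Hin) ->. Qed.

Lemma indeg_contract (w : cvert e0) : indeg (G:=contract e0) w = indeg (val w).
Proof.
rewrite /indeg /=.
rewrite (eq_card (B := [pred f : cedge e0 | rg (val f) == val w])); last first.
  move=> f; rewrite !inE -val_eqE val_redirect.
  by have := rgN (valP f); case: ifP.
rewrite (card_cedge (fun f => rg f == val w)); apply: eq_card => f; rewrite !inE.
case: eqP => [->|_] //=; rewrite eq_sym; exact/esym/negbTE/(valN w).
Qed.

Lemma n_contract : n_indeg1 (contract e0) + 1 = n_indeg1 G.
Proof.
rewrite /n_indeg1.
rewrite (eq_card (B := [pred w : cvert e0 | indeg (val w) == 1])); last first.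
  by move=> w; rewrite !inE indeg_contract.
rewrite (card_cvert (fun w => indeg w == 1)) [RHS](cardD1 (rg e0)) inE Hin eqxx addnC; congr (_ + _).
by apply: eq_card => w; rewrite !inE keepE.
Qed.

Lemma connect_contract a b : connect (adj (G:=G)) a b ->
  connect (adj (G:=contract e0)) (redirect e0 a) (redirect e0 b).
Proof.
move=> /connectP [p]; elim: p a => [|x p IH] a /=; first by move=> _ ->.
case/andP => /existsP [f /andP [/eqP Hs /eqP Hr]] Hp Hl.
apply: connect_trans (IH x Hp Hl).
case: (eqVneq f e0) => [Ef|Nf].
  suff -> : redirect e0 a = redirect e0 x by [].
  by apply: val_inj; rewrite !val_redirect -Hs -Hr Ef eqxx eq_sym (negbTE Hnl).
apply: connect1; apply/existsP; exists (exist _ f Nf).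
by rewrite /= Hs Hr !eqxx.
Qed.

Lemma trans_contract : transitive_graph (contract e0).
Proof.
move=> x y; rewrite -(redirect_val x) -(redirect_val y).
exact: connect_contract.
Qed.
End T.

Section U.
Variable G : graph.
Variable e0 : edge G.
Hypothesis Htr : transitive_graph G.
Hypothesis Hin : indeg (rg e0) = 1.
Hypothesis Hnl : rg e0 != sc e0.

Lemma cardU_disj (T : finType) (A B : pred T) :
  (forall x, A x -> B x -> False) -> #|[predU A & B]| = #|A| + #|B|.
Proof.
move=> D; rewrite -cardUI (@eq_card0 _ [predI A & B]) ?addn0 // => x.
rewrite !inE; apply/negbTE/negP => /andP [] Ax Bx; exact: D Ax Bx.
Qed.

Lemma cnt_contract (x y : cvert e0) :
  cnt (H:=contract e0) x y =
  cnt (val x) (val y) + (val x == sc e0) * cnt (rg e0) (val y).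
Proof.
rewrite /cnt /=.
rewrite (eq_card (B := [pred f : cedge e0 |
   ((if sc (val f) == rg e0 then sc e0 else sc (val f)) == val x) &&
   ((if rg (val f) == rg e0 then sc e0 else rg (val f)) == val y)])); last first.
  by move=> f; rewrite !inE -!val_eqE !val_redirect.
rewrite (@card_cedge _ e0 (fun f => ((if sc f == rg e0 then sc e0 else sc f) == val x) &&
   ((if rg f == rg e0 then sc e0 else rg f) == val y))).
have Nx : sval x != rg e0 := valN Hnl x; have Ny : sval y != rg e0 := valN Hnl y.
rewrite (eq_card (B := [predU [pred f | (sc f == val x) && (rg f == val y)] &
   [pred f | (val x == sc e0) && (sc f == rg e0) && (rg f == val y)]])); last first.
  move=> f; rewrite !inE.
  case: (eqVneq f e0) => [->|Nf] /=.
    by rewrite [rg e0 == _]eq_sym (negbTE Ny) !andbF.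
  rewrite (negbTE (rgN Hin Nf)).
  case: (eqVneq (sc f) (rg e0)) => [->|Ns] /=.
    by rewrite [rg e0 == _]eq_sym (negbTE Nx) andbT [sc e0 == _]eq_sym.
  by rewrite andbF /= orbF.
rewrite cardU_disj; last first.
  move=> f /andP [/eqP E _] /andP [/andP [_ /eqP E'] _].
  by rewrite -E E' eqxx in Nx.
congr (_ + _); case: (val x == sc e0) => /=.
  by rewrite mul1n; apply: eq_card.
by rewrite mul0n; apply: eq_card0.
Qed.

Lemma cnt_to_v (x : vert G) : cnt x (rg e0) = (x == sc e0).
Proof.
rewrite /cnt; case: (eqVneq x (sc e0)) => [->|Nx] /=.
  rewrite (@eq_card _ _ (pred1 e0)) ?card1 // => f; rewrite !inE.
  case: (eqVneq f e0) => [->|Nf]; first by rewrite !eqxx.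
  by rewrite (negbTE (rgN Hin Nf)) andbF.
apply: eq_card0 => f; rewrite !inE; case: (eqVneq f e0) => [->|Nf].
  by rewrite eq_sym (negbTE Nx).
by rewrite (negbTE (rgN Hin Nf)) andbF.
Qed.

Lemma cnt_vv : cnt (rg e0) (rg e0) = 0.
Proof. by rewrite cnt_to_v (negbTE Hnl). Qed.

Lemma adj_cnt (x y : vert G) : adj x y = (0 < cnt x y).
Proof.
apply/existsP/card_gt0P => [[f Hf]|[f Hf]]; exists f => //.
Qed.
End U.

Section V.
Variable G : graph.
Variable e0 : edge G.
Hypothesis Htr : transitive_graph G.
Hypothesis Hin : indeg (rg e0) = 1.
Hypothesis Hnl : rg e0 != sc e0.

Lemma out_v : exists y0 : vert G, (y0 != rg e0) && (0 < cnt (rg e0) y0).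
Proof.
move: (Htr (rg e0) (sc e0)) => /connectP [[|y0 p]] /=.
  by move=> _ E; move: Hnl; rewrite E eqxx.
case/andP => Ha _ _; exists y0; rewrite -adj_cnt Ha andbT.
apply/negP => /eqP E; move: Ha; rewrite E adj_cnt (cnt_vv Hin Hnl).
by [].
Qed.

Lemma modS_aux N s i j : j < N ->
  ((j + s) %% N == ((i + s) %% N).+1 %% N) = (j == i.+1 %% N).
Proof.
move=> Hj; rewrite -[(_ %% N).+1]addn1 modnDml -addnA [s + 1]addnC addnA addn1.
by rewrite eqn_modDr (modn_small Hj).
Qed.

Lemma not_cycle_contract : ~ is_cycle G -> ~ is_cycle (contract e0).
Proof.
move=> Hnc [n [f' [n0 [fbij Hc]]]]; apply: Hnc.
case: n f' n0 fbij Hc => [//|m] f' _ fbij Hc.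
set N := m.+1.
have Hc' : forall i j, cnt (f' i) (f' j) = (j == ordS i) by [].
clear Hc.
set u' := redirect e0 (sc e0).
have vu' : val u' = sc e0 by rewrite val_redirect eq_sym (negbTE Hnl).
have [g fK gK] := fbij.
set k := g u'.
have fk : f' k = u' by rewrite gK.
have [y0 /andP [Ny0 Hy0]] := out_v.
set y0' := redirect e0 y0.
have vy0 : val y0' = y0 by rewrite val_redirect (negbTE Ny0).
have A : forall y' : cvert e0, cnt (sc e0) (val y') = 0.
  move=> y'.
  have E1 := cnt_contract Hin Hnl u' y'; rewrite vu' eqxx mul1n in E1.
  rewrite -fk -(gK y') Hc' in E1.
  have E2 := cnt_contract Hin Hnl u' y0'; rewrite vu' eqxx mul1n vy0 in E2.
  rewrite -fk -(gK y0') Hc' in E2.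
  have Eg : g y0' = ordS k.
    by apply/eqP; move: E2; case: (g y0' == ordS k) => //=; move: Hy0; case: (cnt _ y0) => //; lia.
  case: (eqVneq y' y0') => [->|Ny].
    by move: E2; rewrite Eg eqxx vy0; move: Hy0; lia.
  move: E1; rewrite -Eg (inj_eq (can_inj gK)) (negbTE Ny) /= gK; lia.
pose h (i : nat) : 'I_N := inord ((i + k.+1) %% N).
have vh : forall i, (h i : nat) = (i + k.+1) %% N.
  by move=> i; rewrite inordK // ltn_pmod.
have h_inj : forall i j, i < N -> j < N -> (h i == h j) = (i == j).
  by move=> i j Hi Hj; rewrite -val_eqE /= !vh eqn_modDr !modn_small.
have h_last : h m = k.
  by apply: val_inj; rewrite /= vh addnS -addSn addnC modnDr modn_small.
have h_S : forall i j, i < N -> j < N -> (h j == ordS (h i)) = (j == i.+1 %% N).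
  by move=> i j Hi Hj; rewrite -val_eqE /= !vh modS_aux.
pose gv i := sval (f' (h i)).
have gvN : forall i, gv i != rg e0 by move=> i; exact: valN.
have gv_u : forall i, i < N -> (gv i == sc e0) = (i == m).
  move=> i Hi; rewrite /gv -vu' val_eqE -fk (inj_eq (can_inj fK)) -h_last h_inj //.
have cg : forall i j, i < N -> j < N ->
    cnt (gv i) (gv j) + (i == m) * cnt (rg e0) (gv j) = (j == i.+1 %% N).
  move=> i j Hi Hj; have := cnt_contract Hin Hnl (f' (h i)) (f' (h j)).
  by rewrite Hc' h_S // -/(gv i) -/(gv j) -gv_u // => <-.
have A' : forall j, cnt (sc e0) (gv j) = 0 := fun j => A (f' (h j)).
have gm : gv m = sc e0 by apply/eqP; rewrite gv_u.
pose F (i : 'I_N.+1) : vert G := if i < N then gv i else rg e0.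
have cardV : #|vert G| = N.+1.
  have := bij_eq_card fbij; rewrite card_ord /= => E.
  rewrite (cardD1 (rg e0)) inE add1n /N E; congr (_.+1).
  change (#|[predD1 vert G & rg e0]| = #|{: {x | keepV e0 x}}|).
  rewrite card_sig.
  by apply: eq_card => w; rewrite !inE keepE // andbT.
exists N.+1, F; split=> //; split.
  apply: inj_card_bij; last by rewrite card_ord cardV.
  move=> i j; rewrite /F; case: ifP => Hi; case: ifP => Hj.
  - move/val_inj/(can_inj fK)/eqP; rewrite h_inj // => /eqP E; exact: val_inj.
  - by move=> E; move: (gvN i); rewrite E eqxx.
  - by move=> E; move: (gvN j); rewrite -E eqxx.
  - move=> _; apply: val_inj; move: Hi Hj (ltn_ord i) (ltn_ord j) => /=; lia.
move=> i j; change (cnt (F i) (F j) = (j == ordS i)).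
rewrite -val_eqE /= /F; case: ifP => Hi; case: ifP => Hj.
- have := cg i j Hi Hj; case: (eqVneq (i : nat) m) => [Em|Nm].
    rewrite Em gm A' => _; rewrite modn_small //; move: Hj; rewrite /N.
    by case: eqP => // ->; rewrite ltnn.
  rewrite mul0n addn0 => ->.
  have Hi1 : i.+1 < N by move: Hi Nm; rewrite /N; lia.
  by rewrite !modn_small // ltnW.
- rewrite (cnt_to_v Hin) gv_u // modn_small; last by move: Hi; rewrite /N; lia.
  by congr (nat_of_bool _); apply/eqP/eqP; move: Hi Hj (ltn_ord j); rewrite /N; lia.
- have := cg m j (ltnSn m) Hj; rewrite gm A' eqxx mul1n add0n => ->.
  have -> : (i : nat) = N by move: Hi (ltn_ord i); rewrite /N; lia.
  by rewrite !modnn.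
- rewrite (cnt_vv Hin Hnl).
  have -> : (i : nat) = N by move: Hi (ltn_ord i); rewrite /N; lia.
  have -> : (j : nat) = N by move: Hj (ltn_ord j); rewrite /N; lia.
  by rewrite modnn.
Qed.
End V.

Theorem lemma3p3 (G : graph) (e0 : edge G) :
  transitive_graph G -> ~ is_cycle G -> indeg (rg e0) = 1 ->
  [/\ ~ is_loop e0,
      n_indeg1 (contract e0) + 1 = n_indeg1 G &
      transitive_graph (contract e0) /\ ~ is_cycle (contract e0)].
Proof.
move=> Htr Hnc Hin.
have Hl := not_loop Htr Hin Hnc.
have Hnl : rg e0 != sc e0 by apply/eqP.
split=> //; first exact: n_contract.
split; first exact: trans_contract.
exact: not_cycle_contract.
Qed.
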